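(* Let $f$ be a real Laurent polynomial whose signed support $(\mathcal A_+,\mathcal A_-)$ is full dimensional and nonseparable. If $x_*\in\operatorname{Sing}_{>0}(f)$, then $\det(\operatorname{Hess}(f)(x_* ))>0$.
   Context: A real Laurent polynomial $f(x)=\sum_{a\in\mathcal A_+}c_ax^a-\sum_{b\in\mathcal A_-}c_bx^b$ with disjoint finite $\mathcal A_+,\mathcal A_-\subseteq\mathbb Z^n$ and all $c_a,c_b>0$ has signed support $(\mathcal A_+,\mathcal A_-)$; it is full dimensional if $\dim\operatorname{conv}(\mathcal A_+\cup\mathcal A_-)=n$. $\mathcal F(\mathcal A_+)$ is the common refinement of all regular polyhedral subdivisions of $\mathcal A_+$, $\mathcal F_n(\mathcal A_+)$ its $n$-cells; $(\mathcal A_+,\mathcal A_-)$ is nonseparable if $\mathcal A_-\subseteq\operatorname{relint}\operatorname{conv}(\mathcal A_+)$ and some $D\in\mathcal F_n(\mathcal A_+)$ contains $\mathcal A_-$. $\operatorname{Sing}_{>0}(f)$ is the set of $x\in\mathbb R^n_{>0}$ with $f(x)=x_1\partial_{x_1}f(x)=\dots=x_n\partial_{x_n}f(x)=0$. $\operatorname{Hess}(f)$ is the Hessian matrix of second partial derivatives. *)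

(* Defs.v *)
From HB Require Import structures.
From mathcomp Require Import all_boot all_order all_algebra.
From mathcomp Require Import all_classical all_reals all_analysis.
Set Implicit Arguments. Unset Strict Implicit. Unset Printing Implicit Defensive.
Import Order.TTheory GRing.Theory Num.Theory.
Local Open Scope classical_set_scope.
Local Open Scope ring_scope.

Section Defs.
Variables (R : realType) (n : nat).

Definition monom (a : 'rV[int]_n) (x : 'rV[R]_n) : R :=
  \prod_(i < n) (x 0 i) ^ (a 0 i).

Definition laurent (s : seq 'rV[int]_n) (c : 'rV[int]_n -> R) (x : 'rV[R]_n) : R :=
  \sum_(a <- s) c a * monom a x.

Definition Aplus (s : seq 'rV[int]_n) (c : 'rV[int]_n -> R) : seq 'rV[int]_n :=
  [seq a <- s | 0 < c a].
Definition Aminus (s : seq 'rV[int]_n) (c : 'rV[int]_n -> R) : seq 'rV[int]_n :=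
  [seq a <- s | c a < 0].

Definition ri (a : 'rV[int]_n) : 'rV[R]_n := map_mx (fun z : int => z%:~R) a.

Definition upd (x : 'rV[R]_n) (i : 'I_n) (t : R) : 'rV[R]_n :=
  \row_k (if k == i then t else x 0 k).

Definition partial (i : 'I_n) (F : 'rV[R]_n -> R) (x : 'rV[R]_n) : R :=
  derive1 (fun t => F (upd x i t)) (x 0 i).

Definition Hess (F : 'rV[R]_n -> R) (x : 'rV[R]_n) : 'M[R]_n :=
  \matrix_(i < n, j < n) partial i (partial j F) x.

Definition SingPos (F : 'rV[R]_n -> R) : set 'rV[R]_n :=
  [set x : 'rV[R]_n | (forall i, 0 < x 0 i) /\ F x = 0 /\
           (forall i, x 0 i * partial i F x = 0)].

Definition conv (A : seq 'rV[R]_n) : set 'rV[R]_n :=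
  [set p : 'rV[R]_n | exists l : 'I_(size A) -> R,
     (forall k, 0 <= l k) /\ \sum_k l k = 1 /\ p = \sum_k l k *: A`_k].

Definition aff (A : seq 'rV[R]_n) : set 'rV[R]_n :=
  [set p : 'rV[R]_n | exists l : 'I_(size A) -> R,
     \sum_k l k = 1 /\ p = \sum_k l k *: A`_k].

Definition relint_conv (A : seq 'rV[R]_n) : set 'rV[R]_n :=
  [set p : 'rV[R]_n | conv A p /\ exists2 e : R, 0 < e &
     forall q, aff A q -> (forall i, `|q 0 i - p 0 i| < e) -> conv A q].

(* dim S = n : S contains affinely spanning points, i.e. points whose
   differences span R^n *)
Definition full_dim (S : set 'rV[R]_n) : Prop :=
  exists s : seq 'rV[R]_n, (0 < size s)%N /\ (forall p, p \in s -> S p) /\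
    \rank (\matrix_(k < size s, j < n) (s`_k - s`_0) 0 j) = n.

(* P is a cell (as a polytope) of the regular subdivision of A induced by the
   height function h: conv of the points of A whose lifts lie on a lower
   face of conv{(a, h a)}, the lower face being cut out by the graph of an
   affine function lying below all lifted points. *)
Definition reg_cell (A : seq 'rV[R]_n) (h : 'rV[R]_n -> R) (P : set 'rV[R]_n) : Prop :=
  exists (w : 'rV[R]_n) (d : R),
    (forall a, a \in A -> \sum_(i < n) w 0 i * a 0 i + d <= h a) /\
    P = conv [seq a : 'rV[R]_n <- A | \sum_(i < n) w 0 i * a 0 i + d == h a].

(* D is an n-cell of the common refinement F(A) of all regular polyhedral
   subdivisions of A: an intersection of one cell from each regular
   subdivision, of dimension n. *)
Definition refinement_ncell (A : seq 'rV[R]_n) (D : set 'rV[R]_n) : Prop :=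
  full_dim D /\
  exists g : ('rV[R]_n -> R) -> set 'rV[R]_n,
    (forall h, reg_cell A h (g h)) /\ D = [set p : 'rV[R]_n | forall h, g h p].

Definition nonseparable (Ap Am : seq 'rV[int]_n) : Prop :=
  (forall b, b \in Am -> relint_conv (map ri Ap) (ri b)) /\
  exists D, refinement_ncell (map ri Ap) D /\ (forall b, b \in Am -> D (ri b)).

Definition full_dimensional (Ap Am : seq 'rV[int]_n) : Prop :=
  full_dim (conv (map ri (Ap ++ Am))).

End Defs.

(* Main.v *)
Require Import Defs.
From HB Require Import structures.
From mathcomp Require Import all_boot all_order all_algebra.
From mathcomp Require Import all_classical all_reals all_analysis.
From mathcomp Require Import ring lra.
Import Order.TTheory GRing.Theory Num.Theory.
Import numFieldNormedType.Exports.
Local Open Scope classical_set_scope.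
Local Open Scope ring_scope.

Section Calc.
Variables (R : realType) (n : nat).

Lemma scaleRE (a b : R^o) : a *: b = a * b. Proof. by []. Qed.

Lemma is_derive_exprz (z : int) (t : R) : t != 0 ->
  is_derive t 1 (fun u : R => u ^ z) (z%:~R * t ^ z / t).
Proof.
move=> t0; case: z => [k|k].
- have -> : (fun u : R => u ^ (Posz k)) = (@id R) ^+ k.
    by apply/funext => u; rewrite /= exprfctE.
  apply: is_derive_eq.
  case: k => [|k]; first by rewrite !expr0 /= mul0r mul0r scale0r.
  by rewrite scaleRE mulr1 /= pmulrn -!exprnP exprSr mulrA mulfK.
- suff H : is_derive t 1 (fun u => (((@id R) ^+ k.+1) u)^-1)
             ((Negz k)%:~R * t ^ Negz k / t).
    move: H; congr is_derive; apply/funext => u.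
    by rewrite NegzE exprfctE /= exprnN.
  eapply is_derive_eq.
    apply: (@is_deriveV _ ((@id R) ^+ k.+1)); first by rewrite exprfctE expf_neq0.
  rewrite !scaleRE mulr1 exprfctE /= NegzE -exprnN mulrNz -pmulrn.
  have -> : t ^+ k.+1 = t ^+ k * t by rewrite exprSr.
  have ta : t ^+ k != 0 by rewrite expf_neq0.
  move: (t ^+ k) ta => a ta.
  by field; rewrite ta t0.
Qed.

Lemma upd_same (y : 'rV[R]_n) i : upd y i (y 0 i) = y.
Proof. by apply/rowP => k; rewrite mxE; case: eqP => // ->. Qed.

Lemma monom_upd a (y : 'rV[R]_n) i t : monom a (upd y i t) =
  t ^ (a 0 i) * \prod_(k < n | k != i) y 0 k ^ a 0 k.
Proof.
rewrite /monom (bigD1 i) //= mxE eqxx; congr (_ * _).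
by apply: eq_bigr => k /negbTE ki; rewrite mxE ki.
Qed.

Lemma is_derive_monom a (y : 'rV[R]_n) i : y 0 i != 0 ->
  is_derive (y 0 i) 1 (fun t => monom a (upd y i t))
    ((a 0 i)%:~R * monom a y / y 0 i).
Proof.
move=> y0.
set P := \prod_(k < n | k != i) y 0 k ^ a 0 k.
suff H : is_derive (y 0 i) 1 (P *: (fun t : R => t ^ (a 0 i)))
   ((a 0 i)%:~R * monom a y / y 0 i).
  move: H; congr is_derive; apply/funext => t; rewrite monom_upd.
  by transitivity (P * t ^ a 0 i); [by [] | rewrite mulrC].
eapply is_derive_eq; first by apply: is_deriveZ; exact: is_derive_exprz.
rewrite scaleRE.
have -> : monom a y = y 0 i ^ a 0 i * P by rewrite -{1}(upd_same y i) monom_upd.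
by rewrite mulrCA !mulrA.
Qed.

Lemma is_derive_lsum (s : seq 'rV[int]_n) (K : 'rV[int]_n -> R) (y : 'rV[R]_n) i :
  y 0 i != 0 ->
  is_derive (y 0 i) 1 (fun t => \sum_(a <- s) K a * monom a (upd y i t))
    (\sum_(a <- s) K a * ((a 0 i)%:~R * monom a y / y 0 i)).
Proof.
move=> y0; elim: s => [|a s IH].
  suff H : is_derive (y 0 i) 1 (cst (0:R)) (\sum_(a <- [::]) K a * ((a 0 i)%:~R * monom a y / y 0 i)).
    by move: H; congr is_derive; apply/funext => t; rewrite big_nil.
  rewrite big_nil; exact: is_derive_cst.
suff H : is_derive (y 0 i) 1 ((K a *: (fun t => monom a (upd y i t))) +
     (fun t => \sum_(a <- s) K a * monom a (upd y i t)))
   (\sum_(a0 <- (a :: s)) K a0 * ((a0 0 i)%:~R * monom a0 y / y 0 i)).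
  by move: H; congr is_derive; apply/funext => t; rewrite big_cons.
rewrite big_cons; apply: is_deriveD => //; apply: is_deriveZ; exact: is_derive_monom.
Qed.

Lemma partialE s c (y : 'rV[R]_n) i : y 0 i != 0 ->
  partial i (laurent s c) y = \sum_(a <- s) c a * ((a 0 i)%:~R * monom a y / y 0 i).
Proof.
move=> y0; rewrite /partial derive1E.
have H := is_derive_lsum s c y i y0.
exact: derive_val.
Qed.

Definition Mij (s : seq 'rV[int]_n) (c : 'rV[int]_n -> R) (y : 'rV[R]_n) i j :=
  \sum_(a <- s) c a * ((a 0 i)%:~R * (a 0 j)%:~R * monom a y).

Lemma HessE (s : seq 'rV[int]_n) (c : 'rV[int]_n -> R) (xs : 'rV[R]_n) : (forall i, 0 < xs 0 i) ->
  (forall i, \sum_(a <- s) c a * ((a 0 i)%:~R * monom a xs) = 0) ->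
  forall i j, Hess (laurent s c) xs i j = Mij s c xs i j / (xs 0 i * xs 0 j).
Proof.
move=> pos mom i j; rewrite /Hess mxE /partial derive1E.
have xn0 k : xs 0 k != 0 by rewrite gt_eqF.
case: (eqVneq i j) => [<-|ij].
- pose G := (fun t : R => \sum_(a <- s) (c a * (a 0 i)%:~R) * monom a (upd xs i t)) *
            (fun t : R => t^-1).
  have Hn : \forall t \near (xs 0 i : R), (G : R -> R) t = partial i (laurent s c) (upd xs i t).
    near=> t.
    have t0 : 0 < t by near: t; exact: lt_nbhsr.
    rewrite partialE; last by rewrite mxE eqxx gt_eqF.
    rewrite /G /= mxE eqxx.
    transitivity ((\sum_(a <- s) c a * (a 0 i)%:~R * monom a (upd xs i t)) * t^-1); first by [].
    by rewrite mulr_suml; apply: eq_bigr => a _; rewrite !mulrA.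
  rewrite -(near_eq_derive _ Hn).
  have HG : is_derive (xs 0 i) 1 G
     (0 *: (- (xs 0 i) ^- 2 *: 1) + (xs 0 i)^-1 *:
       \sum_(a <- s) (c a * (a 0 i)%:~R) * ((a 0 i)%:~R * monom a xs / xs 0 i)).
    have E0 : \sum_(a <- s) (c a * (a 0 i)%:~R) * monom a (upd xs i (xs 0 i)) = 0.
      by rewrite upd_same -[RHS](mom i); apply: eq_bigr => a _; rewrite mulrA.
    rewrite -[X in X *: (- _ *: _)]E0.
    apply: is_deriveM; first exact: is_derive_lsum.
    exact: (@is_deriveV _ id).
  rewrite derive_val scale0r add0r scaleRE /Mij mulr_sumr mulr_suml.
  apply: eq_bigr => a _.
  by field; rewrite xn0.
- have ji : j != i by rewrite eq_sym.
  have -> : (fun t : R => partial j (laurent s c) (upd xs i t)) =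
     (fun t => \sum_(a <- s) (c a * (a 0 j)%:~R / xs 0 j) * monom a (upd xs i t)).
    apply/funext => t; rewrite partialE; last by rewrite mxE (negbTE ji).
    rewrite mxE (negbTE ji); apply: eq_bigr => a _.
    by rewrite mulrAC !mulrA.
  have HH := is_derive_lsum s (fun a => c a * (a 0 j)%:~R / xs 0 j) xs i (xn0 i).
  rewrite derive_val /Mij mulr_suml.
  apply: eq_bigr => a _.
  by field; rewrite !xn0.
Unshelve. all: by end_near.
Qed.
End Calc.

Section PD.
Variables (R : realType) (n : nat).

Definition qf (A : 'M[R]_n) (v : 'rV[R]_n) : R :=
  \sum_(i < n) \sum_(j < n) v 0 i * A i j * v 0 j.

Lemma qf_det0 (A : 'M[R]_n) : (forall v, v != 0 -> 0 < qf A v) -> \det A != 0.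
Proof.
move=> H; apply/negP => /det0P [w w0 wA].
have := H w w0.
have -> : qf A w = \sum_(j < n) (w *m A) 0 j * w 0 j.
  rewrite /qf exchange_big /=; apply: eq_bigr => j _.
  by rewrite !mxE mulr_suml.
by rewrite wA big1 ?ltxx // => j _; rewrite mxE mul0r.
Qed.

Lemma sumsq_gt0 (v : 'rV[R]_n) : v != 0 -> 0 < \sum_(i < n) v 0 i ^+ 2.
Proof.
move=> v0.
have [i vi] : exists i, v 0 i != 0.
  apply/existsP; apply: contraR v0 => /existsPn H.
  by apply/eqP/rowP => k; rewrite mxE; move: (H k); rewrite negbK => /eqP.
rewrite (bigD1 i) //=; apply: ltr_pwDl; first by rewrite lt_def sqrf_eq0 vi sqr_ge0.
by apply: sumr_ge0 => k _; rewrite sqr_ge0.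
Qed.

Lemma qf_comb (A : 'M[R]_n) (t : R) v :
  qf ((1 - t) *: 1%:M + t *: A) v = (1 - t) * \sum_(i < n) v 0 i ^+ 2 + t * qf A v.
Proof.
have E i : \sum_(j < n) v 0 i * ((1 - t) *: 1%:M + t *: A) i j * v 0 j =
   (1 - t) * v 0 i ^+ 2 + t * \sum_(j < n) v 0 i * A i j * v 0 j.
  have -> : \sum_(j < n) v 0 i * ((1 - t) *: 1%:M + t *: A) i j * v 0 j =
     \sum_(j < n) ((1 - t) * (v 0 i * (i == j)%:R * v 0 j) + t * (v 0 i * A i j * v 0 j)).
    by apply: eq_bigr => j _; rewrite !mxE; ring.
  rewrite big_split /= -!mulr_sumr; congr (_ * _ + _).
  rewrite (bigD1 i) //= eqxx big1 ?addr0; first by rewrite mulr1 expr2.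
  by move=> j ji; rewrite eq_sym (negbTE ji) mulr0 mul0r.
rewrite /qf (eq_bigr _ (fun i _ => E i)) big_split /= -!mulr_sumr //.
Qed.

Lemma pd_det (A : 'M[R]_n) : (forall v, v != 0 -> 0 < qf A v) -> 0 < \det A.
Proof.
move=> H.
pose P : {poly R} := \det (\matrix_(i, j) ((1 - 'X) * (i == j)%:R%:P + 'X * (A i j)%:P)).
have Pe t : P.[t] = \det ((1 - t) *: 1%:M + t *: A).
  rewrite -horner_evalE -det_map_mx; congr (determinant _); apply/matrixP => i j.
  by rewrite !mxE /= horner_evalE !hornerE.
have nz (u : R) : 0 <= u <= 1 -> P.[u] != 0.
  move=> /andP [t0 t1]; rewrite Pe; apply: qf_det0 => v v0.
  rewrite qf_comb; have := sumsq_gt0 v v0; have := H v v0; nra.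
rewrite ltNge; apply/negP => dA.
have cont : {within `[0, 1], continuous (horner P)}.
  apply: continuous_subspaceT => x; exact: continuous_horner.
have rng : Num.min (P.[0]) (P.[1]) <= 0 <= Num.max (P.[0]) (P.[1]).
  rewrite Pe Pe subr0 subrr !scale0r scale1r addr0 add0r scale1r det1 /=.
  by rewrite ge_min le_max dA ler01 !orbT.
have [c c01 Pc] := @IVT R (horner P) 0 1 0 ler01 cont rng.
move: c01; rewrite in_itv /= => /nz; by rewrite Pc eqxx.
Qed.
End PD.

Set Implicit Arguments. Unset Strict Implicit.
Section Geo.
Variables (R : realType) (n : nat).

Definition lin (w p : 'rV[R]_n) : R := \sum_(i < n) w 0 i * p 0 i.

Lemma linD w p q : lin w (p + q) = lin w p + lin w q.
Proof. by rewrite /lin -big_split; apply: eq_bigr => i _; rewrite mxE mulrDr. Qed.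

Lemma linZ w t p : lin w (t *: p) = t * lin w p.
Proof. by rewrite /lin mulr_sumr; apply: eq_bigr => i _; rewrite mxE mulrCA. Qed.

Lemma linN w p : lin w (- p) = - lin w p.
Proof. by rewrite -scaleN1r linZ mulN1r. Qed.

Lemma linB w p q : lin w (p - q) = lin w p - lin w q.
Proof. by rewrite linD linN. Qed.

Lemma lin_sum w m (l : 'I_m -> R) (P : 'I_m -> 'rV[R]_n) :
  lin w (\sum_(k < m) l k *: P k) = \sum_(k < m) l k * lin w (P k).
Proof.
elim/big_rec2: _ => [|k x y _ <-]; first by rewrite /lin big1 // => i _; rewrite mxE mulr0.
by rewrite linD linZ.
Qed.

Lemma jensen m (l t : 'I_m -> R) : (forall k, 0 <= l k) -> \sum_k l k = 1 ->
  (\sum_k l k * t k) ^+ 2 <= \sum_k l k * t k ^+ 2.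
Proof.
move=> l0 l1; set M := \sum_k l k * t k.
have HM : \sum_k l k * t k = M by [].
clearbody M.
have E : \sum_k l k * (t k - M) ^+ 2 = \sum_k l k * t k ^+ 2 - M ^+ 2.
  transitivity (\sum_k (l k * t k ^+ 2) - 2 * M * \sum_k (l k * t k) + M ^+ 2 * \sum_k l k).
    rewrite !mulr_sumr -sumrB -big_split /=; apply: eq_bigr => k _; ring.
  rewrite l1 HM; ring.
have : 0 <= \sum_k l k * (t k - M) ^+ 2.
  by apply: sumr_ge0 => k _; rewrite mulr_ge0 // sqr_ge0.
rewrite E subr_ge0 //.
Qed.

Lemma conv_le (v w : 'rV[R]_n) d (E : seq 'rV[R]_n) p :
  (forall e, e \in E -> lin v e ^+ 2 <= lin w e + d) -> Defs.conv E p ->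
  lin v p ^+ 2 <= lin w p + d.
Proof.
move=> HE [l [l0 [l1 ->]]]; rewrite !lin_sum.
have J := @jensen _ l (fun k => lin v E`_k) l0 l1.
apply: le_trans J _.
have -> : \sum_k l k * lin w E`_k + d = \sum_k l k * (lin w E`_k + d).
  by rewrite -[in LHS](mulr1 d) -l1 mulr_sumr -big_split /=; apply: eq_bigr => k _; ring.
apply: ler_sum => k _; apply: ler_wpM2l => //; apply: HE; exact: mem_nth.
Qed.

Lemma aff_conv (A : seq 'rV[R]_n) p : Defs.conv A p -> aff A p.
Proof. by move=> [l [_ [l1 ->]]]; exists l. Qed.

Lemma aff_mem (A : seq 'rV[R]_n) e : e \in A -> aff A e.
Proof.
move=> eA.
have jlt : (index e A < size A)%N by rewrite index_mem.
exists (fun k : 'I_(size A) => ((k : nat) == index e A)%:R); split.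
  rewrite (bigD1 (Ordinal jlt)) //= eqxx big1 ?addr0 // => k kj.
  suff -> : ((k : nat) == index e A) = false by [].
  by apply: contraNF kj => /eqP kE; apply/eqP/val_inj.
rewrite (bigD1 (Ordinal jlt)) //= eqxx scale1r nth_index // big1 ?addr0 // => k kj.
suff -> : ((k : nat) == index e A) = false by rewrite scale0r.
by apply: contraNF kj => /eqP kE; apply/eqP/val_inj.
Qed.

Lemma aff_comb (A : seq 'rV[R]_n) (I : finType) (mu : I -> R) (P : I -> 'rV[R]_n) :
  \sum_i mu i = 1 -> (forall i, aff A (P i)) -> aff A (\sum_i mu i *: P i).
Proof.
move=> mu1 HP.
have [L HL] := choice HP.
exists (fun k => \sum_i mu i * L i k); split.
  rewrite exchange_big /= -mu1; apply: eq_bigr => i _.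
  by rewrite -mulr_sumr (proj1 (HL i)) mulr1.
rewrite (eq_bigr (fun i => mu i *: \sum_k L i k *: A`_k)); last first.
  by move=> i _; rewrite -(proj2 (HL i)).
under eq_bigr do rewrite scaler_sumr.
rewrite exchange_big /=; apply: eq_bigr => k _.
by rewrite scaler_suml; apply: eq_bigr => i _; rewrite scalerA.
Qed.

Lemma aff_line (A : seq 'rV[R]_n) p q r t : aff A p -> aff A q -> aff A r ->
  aff A (p + t *: (q - r)).
Proof.
move=> [l1 [s1 ->]] [l2 [s2 ->]] [l3 [s3 ->]].
exists (fun k => l1 k + t * (l2 k - l3 k)); split.
  by rewrite big_split /= -mulr_sumr sumrB s1 s2 s3 subrr mulr0 addr0.
rewrite -sumrB scaler_sumr -big_split /=; apply: eq_bigr => k _.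
by rewrite scalerDl scalerBr !scalerA mulrBr scalerBl.
Qed.

Lemma conv_aff (A B : seq 'rV[R]_n) p : Defs.conv B p ->
  (forall e, e \in B -> aff A e) -> aff A p.
Proof.
move=> [l [_ [l1 ->]]] HB; apply: aff_comb => // k; apply: HB; exact: mem_nth.
Qed.

End Geo.

Unset Implicit Arguments. Set Strict Implicit.

Section Main.
Variables (R : realType) (n : nat).

Lemma abs_le_sum (u : 'rV[R]_n) i : `|u 0 i| <= \sum_(j < n) `|u 0 j|.
Proof.
rewrite (bigD1 i) //= lerDl; by apply: sumr_ge0 => j _.
Qed.

Lemma rank_zero m (M : 'M[R]_(m, n)) (v : 'rV[R]_n) : \rank M = n ->
  (forall k, lin v (row k M) = 0) -> v = 0.
Proof.
move=> rk Hk.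
have rf : row_free M^T by rewrite /row_free mxrank_tr rk.
apply: (row_free_inj rf); rewrite mul0mx; apply/rowP => k.
rewrite !mxE -[RHS](Hk k) /lin; apply: eq_bigr => j _; by rewrite !mxE.
Qed.

Lemma Qpos (s : seq 'rV[int]_n) (c : 'rV[int]_n -> R) (X : 'rV[int]_n -> R) :
  (forall a, 0 < X a) ->
  \sum_(a <- s) c a * X a = 0 ->
  (forall i, \sum_(a <- s) c a * ((a 0 i)%:~R * X a) = 0) ->
  @full_dimensional R n (Aplus s c) (Aminus s c) -> @nonseparable R n (Aplus s c) (Aminus s c) ->
  forall v : 'rV[R]_n, v != 0 -> 0 < \sum_(a <- s) c a * X a * lin v (ri R a) ^+ 2.
Proof.
move=> Xp S0 S1 [S [Ssize [SinC Srank]]] [Hrel [D [[Dfd [g [Hg DE]]] HD]]] v v0.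
pose h := fun p : 'rV[R]_n => lin v p ^+ 2.
have [w [d [Hle Hcell]]] := Hg h.
pose l := fun p : 'rV[R]_n => lin w p + d.
have Hl0 : \sum_(a <- s) c a * X a * l (ri R a) = 0.
  transitivity (\sum_(i < n) w 0 i * \sum_(a <- s) c a * ((a 0 i)%:~R * X a) +
                d * \sum_(a <- s) c a * X a); last first.
    by rewrite S0 mulr0 addr0 big1 // => i _; rewrite S1 mulr0.
  rewrite (eq_bigr (fun a => \sum_(i < n) w 0 i * (c a * ((a 0 i)%:~R * X a)) + d * (c a * X a))); last first.
    move=> a _; rewrite /l /lin mulrDr mulr_sumr; congr (_ + _); last by ring.
    by apply: eq_bigr => i _; rewrite mxE; ring.
  rewrite big_split /= exchange_big /= -mulr_sumr; congr (_ + _).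
  by apply: eq_bigr => i _; rewrite mulr_sumr.
have QE : \sum_(a <- s) c a * X a * lin v (ri R a) ^+ 2 =
          \sum_(a <- s) c a * X a * (h (ri R a) - l (ri R a)).
  rewrite (eq_bigr (fun a => c a * X a * h (ri R a) - c a * X a * l (ri R a)) (r := s) (P := predT) (F1 := fun a => c a * X a * (h (ri R a) - l (ri R a)))); last first.
    by move=> a _; rewrite mulrBr.
  by rewrite sumrB Hl0 subr0.
have Xn0 a : X a != 0 by rewrite gt_eqF.
have Hnn a : a \in s -> 0 <= c a * X a * (h (ri R a) - l (ri R a)).
  move=> aS; have Xa := Xp a.
  case: (ltrgtP 0 (c a)) => [cp|cn|c0].
  - have : l (ri R a) <= h (ri R a).
      by apply: Hle; apply: map_f; rewrite mem_filter cp aS.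
    rewrite -subr_ge0 => H; by rewrite mulr_ge0 // mulr_ge0 // ltW.
  - have : h (ri R a) <= l (ri R a).
      have := HD a; rewrite mem_filter cn aS => /(_ isT); rewrite DE => /(_ h).
      rewrite Hcell /h /l => Hc; apply: (conv_le _ Hc) => e; rewrite mem_filter => /andP [/eqP He _].
      by rewrite /h -He.
    rewrite -subr_le0 => H; apply: mulr_le0 => //.
    by rewrite pmulr_lle0 // ltW.
  - by rewrite -c0 !mul0r.
rewrite ltNge; apply/negP => Qle.
have Qge : 0 <= \sum_(a <- s) c a * X a * (h (ri R a) - l (ri R a)).
  by rewrite big_seq; apply: sumr_ge0 => a aS; exact: Hnn.
have Q0 : \sum_(a <- s | a \in s) c a * X a * (h (ri R a) - l (ri R a)) == 0.
  by rewrite -big_seq eq_le Qge -QE Qle.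
rewrite psumr_eq0 in Q0; last exact: Hnn.
have eqHL a : a \in s -> c a != 0 -> h (ri R a) = l (ri R a).
  move=> aS ca; move/allP: Q0 => /(_ a aS); rewrite aS /= mulf_eq0 mulf_eq0 (negbTE ca) (negbTE (Xn0 a)) /=.
  by rewrite subr_eq0 => /eqP.
have eqAp e : e \in map (@ri R n) (Aplus s c) -> lin v e ^+ 2 <= lin w e + d.
  move=> /mapP [a]; rewrite mem_filter => /andP [ca aS] ->.
  by have := eqHL a aS (lt0r_neq0 ca); rewrite /h /l => ->.
have [b bAm] : exists b, b \in Aminus s c.
  case Em : (Aminus s c) => [|b Am']; last by exists b; rewrite mem_head.
  exfalso.
  have Hn a' : a' \in s -> 0 <= c a' * X a'.
    move=> aS; rewrite pmulr_lge0 //; rewrite leNgt; apply/negP => cn.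
    have : a' \in Aminus s c by rewrite mem_filter cn aS.
    by rewrite Em in_nil.
  have S0' : \sum_(a <- s | a \in s) c a * X a == 0 by rewrite -big_seq S0.
  rewrite psumr_eq0 in S0'; last exact: Hn.
  have Ap0 : Aplus s c = [::].
    rewrite /Aplus -(filter_pred0 s); apply: eq_in_filter => a aS.
    move/allP: S0' => /(_ a aS); rewrite aS /= mulf_eq0 (negbTE (Xn0 a)) orbF => /eqP ->.
    by rewrite ltxx.
  have := SinC _ (mem_nth 0 Ssize); rewrite Ap0 Em /= => [[l0 [_ [l1 _]]]].
  by move: l1; rewrite big_ord0 => /eqP; rewrite eq_sym oner_eq0.
have := bAm; rewrite mem_filter => /andP [cb bS].
have eqb := eqHL b bS (ltr0_neq0 cb).
have [convb [e e0 He]] := Hrel b bAm.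
have affAp p : p \in map (@ri R n) (Aplus s c ++ Aminus s c) -> aff (map (@ri R n) (Aplus s c)) p.
  move=> /mapP [a' a'in ->]; rewrite mem_cat in a'in; case/orP: a'in => H.
  - apply: aff_mem; exact: map_f.
  - apply: aff_conv; exact: (Hrel a' H).1.
have affS j : (j < size S)%N -> aff (map (@ri R n) (Aplus s c)) S`_j.
  by move=> js; apply: conv_aff (SinC _ (mem_nth 0 js)) affAp.
have affb := aff_conv convb.
have HL k : (k < size S)%N -> lin v (S`_k - S`_0) = 0.
  move=> ks.
  set u := S`_k - S`_0.
  have SU : 0 <= \sum_(i < n) `|u 0 i| by apply: sumr_ge0 => i _.
  set U := \sum_(i < n) `|u 0 i| in SU.
  have sp : 0 < 1 + U by lra.
  pose eps := e / (1 + U).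
  have eps0 : 0 < eps by rewrite divr_gt0.
  have close (z : 'rV[R]_n) : (forall i, `|z 0 i| = `|u 0 i|) ->
      forall i, `|(ri R b + eps *: z) 0 i - ri R b 0 i| < e.
    move=> Hz i; rewrite !mxE addrAC subrr add0r normrM (gtr0_norm eps0) Hz.
    have ui := abs_le_sum u i; rewrite -/U in ui.
    have UD : `|u 0 i| / (1 + U) < 1 by rewrite ltr_pdivrMr // mul1r; lra.
    have -> : eps * `|u 0 i| = e * (`|u 0 i| / (1 + U)) by rewrite /eps; ring.
    nra.
  have q1c : Defs.conv (map (@ri R n) (Aplus s c)) (ri R b + eps *: u).
    apply: He; first exact: aff_line affb (affS _ ks) (affS _ Ssize).
    exact: close.
  have q2c : Defs.conv (map (@ri R n) (Aplus s c)) (ri R b + eps *: (- u)).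
    apply: He; first by rewrite /u opprB; exact: aff_line affb (affS _ Ssize) (affS _ ks).
    by apply: close => i; rewrite mxE normrN.
  have H1 := conv_le eqAp q1c.
  have H2 := conv_le eqAp q2c.
  rewrite !linD !linZ !linN in H1 H2.
  move: eqb; rewrite /h /l => eqb.
  have : eps ^+ 2 * lin v u ^+ 2 <= 0 by nra.
  rewrite pmulr_rle0 ?exprn_gt0 // => Hu.
  by apply/eqP; rewrite -sqrf_eq0 eq_le Hu sqr_ge0.
have vz : v = 0.
  apply: (rank_zero _ _ v Srank) => k.
  rewrite -[RHS](HL k (ltn_ord k)) /lin; apply: eq_bigr => j _; by rewrite !mxE.
by rewrite vz eqxx in v0.
Qed.
End Main.

Theorem lemma4p3 (R : realType) (n : nat) (s : seq 'rV[int]_n)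
    (c : 'rV[int]_n -> R) (xs : 'rV[R]_n) :
  @full_dimensional R n (Aplus s c) (Aminus s c) ->
  @nonseparable R n (Aplus s c) (Aminus s c) ->
  SingPos (laurent s c) xs ->
  0 < \det (Hess (laurent s c) xs).
Proof.
move=> Hfd Hns [pos [F0 Hpart]].
have xn0 k : xs 0 k != 0 by rewrite gt_eqF.
have Xp a : 0 < monom a xs.
  by rewrite /monom; apply: prodr_gt0 => i _; rewrite exprz_gt0.
have mom i : \sum_(a <- s) c a * ((a 0 i)%:~R * monom a xs) = 0.
  have H := Hpart i; rewrite partialE // mulr_sumr in H; rewrite -[RHS]H.
  by apply: eq_bigr => a _; field; rewrite xn0.
have HQ := Qpos R n s c (fun a => monom a xs) Xp F0 mom Hfd Hns.
apply: pd_det => v v0.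
pose v' := \row_i (v 0 i / xs 0 i).
have v'0 : v' != 0.
  apply/negP => /eqP H; move/negP: v0; apply; apply/eqP/rowP => i.
  have := congr1 (fun M : 'rV[R]_n => M 0 i) H; rewrite !mxE => /eqP.
  by rewrite mulf_eq0 invr_eq0 (negbTE (xn0 i)) orbF => /eqP.
suff -> : qf R n (Hess (laurent s c) xs) v =
          \sum_(a <- s) c a * monom a xs * lin v' (ri R a) ^+ 2 by exact: HQ.
rewrite /qf.
under eq_bigr do under eq_bigr do rewrite (HessE _ _ _ _ _ pos mom).
have -> : \sum_(a <- s) c a * monom a xs * lin v' (ri R a) ^+ 2 =
  \sum_(a <- s) \sum_(i < n) \sum_(j < n) c a * monom a xs * ((v' 0 i * (ri R a) 0 i) * (v' 0 j * (ri R a) 0 j)).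
  apply: eq_bigr => a _; rewrite /lin expr2 mulr_suml mulr_sumr; apply: eq_bigr => i _.
  by rewrite mulr_sumr mulr_sumr; apply: eq_bigr => j _.
rewrite [RHS]exchange_big /=; apply: eq_bigr => i _.
rewrite [RHS]exchange_big /=; apply: eq_bigr => j _.
rewrite /Mij mulr_suml mulr_sumr mulr_suml; apply: eq_bigr => a _.
rewrite !mxE; field.
by rewrite !xn0.
Qed.
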